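(* Let $|\Psi^{RQ}\rangle$ be a pure state on $\mathcal{H}_R\otimes\mathcal{H}_Q$, with $d=\dim\mathcal{H}_Q$, and let a noisy channel (CPTP map) $\mathcal{E}^Q$ from $Q$ to $Q$ act on $Q$, realized by a unitary $U^{QE}$ acting on $Q$ and an environment $E$ initially in a pure state $|E\rangle$, producing the pure state $\rho^{RQ'E'}$. Let Alice encode classical information in an ensemble $\{p_k,\rho_k^Q\}$ with $\sum_k p_k\rho_k^Q=\rho^Q=\mathrm{Tr}_R|\Psi^{RQ}\rangle\langle\Psi^{RQ}|$, and let $H_{Eve}$ be the classical information Eve obtains, which satisfies $H_{Eve}\le\chi^{E'}$. Then $$I_c(A\rangle B)+H_{Eve}\le \log d .$$
   Context: Notation: $S$ is von Neumann entropy. Bob receives $\rho_k^{Q'}=\mathcal{E}^Q(\rho_k^Q)$ and $\rho^{Q'}=\mathcal{E}^Q(\rho^Q)$; Eve (the environment) holds $\rho_k^{E'}$, $\rho^{E'}$, the corresponding reduced states of the environment after the unitary interaction. Holevo quantities: $\chi^{Q'}=S(\rho^{Q'})-\sum_k p_kS(\rho_k^{Q'})$ and $\chi^{E'}=S(\rho^{E'})-\sum_kp_kS(\rho_k^{E'})$. The coherent information is $I_c(A\rangle B)=I_c(R\rangle Q')=S(\rho^{Q'})-S(\rho^{RQ'})$, where $\rho^{RQ'}=(I^R\otimes\mathcal{E}^Q)(|\Psi^{RQ}\rangle\langle\Psi^{RQ}|)$. Standing convention of the framework (Schumacher–Westmoreland): the coherent information is identified with the difference of Holevo quantities, $I_c(A\rangle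 B)=\chi^{Q'}-\chi^{E'}$. *)

(* Defs.v *)
From mathcomp Require Import all_boot all_order all_algebra.
From mathcomp Require Import complex mxtens spectral.
From mathcomp Require Import all_classical all_reals exp.
Set Implicit Arguments.
Unset Strict Implicit.
Unset Printing Implicit Defensive.
Import GRing.Theory Num.Theory.
Local Open Scope ring_scope.

Section QInfo.
Variable R : realType.
Local Notation C := R[i].

Definition adj {m n} (A : 'M[C]_(m, n)) : 'M[C]_(n, m) := (map_mx conjc A)^T.

Definition psdmx {n} (A : 'M[C]_n) : Prop :=
  forall v : 'cV[C]_n, 0 <= (adj v *m A *m v) 0 0.
Definition densitymx {n} (A : 'M[C]_n) : Prop := psdmx A /\ \tr A = 1.

Definition unit_vec {n} (v : 'cV[C]_n) : Prop := adj v *m v = 1.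
Definition unitary {n} (U : 'M[C]_n) : Prop := U *m adj U = 1%:M /\ adj U *m U = 1%:M.

Definition ptrace1 {m n} (A : 'M[C]_(m * n)) : 'M[C]_n :=
  \matrix_(j, j') \sum_(i < m) A (mxtens_index (i, j)) (mxtens_index (i, j')).
Definition ptrace2 {m n} (A : 'M[C]_(m * n)) : 'M[C]_m :=
  \matrix_(i, i') \sum_(j < n) A (mxtens_index (i, j)) (mxtens_index (i', j)).

(* von Neumann entropy S(rho) = - Tr rho ln rho = - sum_i lambda_i ln lambda_i,
   with lambda_i the eigenvalues (spectral decomposition, spectral.v);
   convention 0 ln 0 = 0 (note ln 0 = 0 in mathcomp-analysis). *)
Definition xlnx (x : R) : R := x * ln x.
Definition vN_entropy {n} (rho : 'M[C]_n) : R :=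
  - \sum_(i < n) xlnx (complex.Re (spectral_diag rho 0 i)).

(* Stinespring realization: Q (dim d), environment E (dim e) in pure state env,
   unitary U on Q (x) E.  Joint output U (rho (x) |E><E|) U^dagger. *)
Definition joint_out {d e} (U : 'M[C]_(d * e)) (env : 'cV[C]_e) (rho : 'M[C]_d)
  : 'M[C]_(d * e) := U *m (rho *t (env *m adj env)) *m adj U.
(* the channel E^Q (Bob's output) and the complementary channel (Eve's output) *)
Definition chan {d e} (U : 'M[C]_(d * e)) (env : 'cV[C]_e) (rho : 'M[C]_d) : 'M[C]_d :=
  ptrace2 (joint_out U env rho).
Definition cchan {d e} (U : 'M[C]_(d * e)) (env : 'cV[C]_e) (rho : 'M[C]_d) : 'M[C]_e :=
  ptrace1 (joint_out U env rho).

(* (I^R (x) E^Q)(|Psi><Psi|) on R (x) Q', computed from the purification: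
   |Psi'> = (1_R (x) U)(|Psi> (x) |E>) on R (x) (Q (x) E), then trace out E. *)
Definition purif_in {r d e} (Psi : 'cV[C]_(r * d)) (env : 'cV[C]_e) : 'cV[C]_(r * (d * e)) :=
  \col_k (let ij := mxtens_unindex k in
          let jl := mxtens_unindex ij.2 in
          Psi (mxtens_index (ij.1, jl.1)) 0 * env jl.2 0).
Definition purif_out {r d e} (Psi : 'cV[C]_(r * d)) (U : 'M[C]_(d * e)) (env : 'cV[C]_e)
  : 'cV[C]_(r * (d * e)) := ((1%:M : 'M[C]_r) *t U) *m purif_in Psi env.
Definition rhoRQ' {r d e} (Psi : 'cV[C]_(r * d)) (U : 'M[C]_(d * e)) (env : 'cV[C]_e)
  : 'M[C]_(r * d) :=
  let rho := purif_out Psi U env *m adj (purif_out Psi U env) in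
  \matrix_(k, k') (let ij := mxtens_unindex k in let ij' := mxtens_unindex k' in
     \sum_(l < e) rho (mxtens_index (ij.1, mxtens_index (ij.2, l)))
                      (mxtens_index (ij'.1, mxtens_index (ij'.2, l)))).

Definition coh_info {r d e} (Psi : 'cV[C]_(r * d)) (U : 'M[C]_(d * e)) (env : 'cV[C]_e) : R :=
  vN_entropy (chan U env (ptrace1 (Psi *m adj Psi))) - vN_entropy (rhoRQ' Psi U env).

Definition holevo {K : finType} {n} (p : K -> R) (sigma_k : K -> 'M[C]_n) (sigma : 'M[C]_n) : R :=
  vN_entropy sigma - \sum_(k : K) p k * vN_entropy (sigma_k k).

End QInfo.

(* Main.v *)
Require Import Defs.
From mathcomp Require Import all_boot all_order all_algebra.
From mathcomp Require Import complex mxtens spectral.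
From mathcomp Require Import all_classical all_reals exp.
From mathcomp Require Import lra sesquilinear.
Local Open Scope sesquilinear_scope.
Import Order.TTheory GRing.Theory Num.Theory.
Local Open Scope ring_scope.

Lemma ln_le_sub1 (R : realType) (x : R) : 0 < x -> ln x <= x - 1.
Proof.
move=> x0; rewrite -ler_expR lnK ?posrE //.
by have := expR_ge1Dx (x - 1); rewrite addrC subrK.
Qed.

Lemma ent_bounds (R : realType) (n : nat) (l : 'I_n -> R) :
  (forall i, 0 <= l i) -> \sum_i l i = 1 ->
  0 <= - \sum_i xlnx (l i) <= ln n%:R.
Proof.
move=> l0 l1; have l_le1 : forall i, l i <= 1.
  move=> i; rewrite -l1 (bigD1 i) //= lerDl; exact: sumr_ge0.
apply/andP; split.
  rewrite oppr_ge0; apply: sumr_le0 => i _; rewrite /xlnx.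
  exact: mulr_ge0_le0 (l0 i) (ln_le0 (l_le1 i)).
have n0 : (0 < n)%N.
  by case: n l l0 l1 {l_le1} => // l _; rewrite big_ord0 => /eqP; rewrite eq_sym oner_eq0.
have nR : (0 : R) < n%:R by rewrite ltr0n.
have key : forall i, - xlnx (l i) <= n%:R^-1 - l i + l i * ln n%:R.
  move=> i; rewrite /xlnx; have [->|li] := eqVneq (l i) 0.
    rewrite !mul0r; have : (0:R) <= n%:R^-1 by rewrite invr_ge0 ler0n.
    lra.
  have lp : 0 < l i by rewrite lt0r li l0.
  have nV : 0 < n%:R^-1 :> R by rewrite invr_gt0.
  have lV : 0 < (l i)^-1 by rewrite invr_gt0.
  have := @ln_le_sub1 R _ (mulr_gt0 nV lV).
  rewrite lnM ?posrE ?invr_gt0 // !lnV ?posrE // => h.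
  have := ler_wpM2l (ltW lp) h.
  rewrite mulrDr mulrBr mulr1 mulrCA mulfV ?mulr1 //.
  rewrite mulrN mulrN. move=> h2. lra.
rewrite -sumrN.
apply: (le_trans (ler_sum _ (fun i _ => key i))).
rewrite !big_split /= -mulr_suml l1 mul1r sumrN l1 sumr_const card_ord -[_ *+ n]mulr_natr mulVf ?gt_eqF //.
by rewrite subrr add0r.
Qed.
Lemma psd_spec (R : realType) n (A : 'M[R[i]]_n) : psdmx A -> \tr A = 1 ->
  A \is normalmx ->
  (forall i, 0 <= spectral_diag A 0 i) /\ \sum_i spectral_diag A 0 i = 1.
Proof.
move=> Apsd Atr /orthomx_spectralP.
set P := spectralmx A; set D := spectral_diag A => AE.
have Pu : P \in unitmx by exact: spectral_unit.
have DE : diag_mx D = P *m A *m invmx P.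
  by rewrite AE !mulmxA mulmxV // mul1mx -mulmxA mulmxV // mulmx1.
split.
  move=> i; have -> : D 0 i = diag_mx D i i by rewrite mxE eqxx mulr1n.
  rewrite DE invmx_unitary ?spectral_unitarymx //.
  have := Apsd ((row i P)^t*).
  congr (_ <= _).
  have -> : adj (row i P ^t*) = row i P.
    by apply/matrixP => a b; rewrite !mxE /= conjcK.
  rewrite !mxE; apply: eq_bigr => j _; rewrite !mxE.
  congr (_ * _); apply: eq_bigr => k _; rewrite !mxE.
  done.
rewrite -mxtrace_diag DE mxtrace_mulC mulmxA mulVmx // mul1mx //.
Qed.

Lemma vN_bounds (R : realType) n (A : 'M[R[i]]_n) : psdmx A -> \tr A = 1 ->
  0 <= vN_entropy A <= ln n%:R.
Proof.
move=> Apsd Atr; rewrite /vN_entropy.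
have [An|An] := boolP (A \is normalmx).
  have [h1 h2] := @psd_spec R n A Apsd Atr An.
  apply: ent_bounds.
    by move=> i; have := h1 i; rewrite lecE => /andP[_].
  have ReD : forall x y : R[i], complex.Re (x+y) = complex.Re x + complex.Re y.
    by case=> ? ? [] ? ?.
  by rewrite -(big_morph (@complex.Re R) ReD (erefl _ : complex.Re 0 = 0)) h2.
have -> : spectral_diag A = 0.
  rewrite /spectral_diag; case: orthomx_spectral_subproof => // h.
  by move: An => /orthomx_spectral_subproof.
have n0 : (0 < n)%N.
  by case: n A {Apsd An} Atr => // A; rewrite /mxtrace big_ord0 => /eqP; rewrite eq_sym oner_eq0.
rewrite big1 ?oppr0 ?lexx ?ln_ge0 ?ler1n // => i _.
by rewrite mxE /xlnx mul0r.
Qed.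

Section Chan.
Variable R : realType.
Local Notation C := R[i].

Lemma adjK m n (A : 'M[C]_(m,n)) : adj (adj A) = A.
Proof. by apply/matrixP => a b; rewrite !mxE /= conjcK. Qed.

Lemma adj_mul m n p (A : 'M[C]_(m,n)) (B : 'M[C]_(n,p)) : adj (A *m B) = adj B *m adj A.
Proof. by rewrite /adj map_mxM trmx_mul. Qed.

Lemma psd_conj m n (B : 'M[C]_(m,n)) (A : 'M[C]_n) : psdmx A -> psdmx (B *m A *m adj B).
Proof.
move=> Ap v; have := Ap (adj B *m v).
by rewrite adj_mul adjK !mulmxA.
Qed.

Lemma psd_sum (I : finType) n (A : I -> 'M[C]_n) : (forall j, psdmx (A j)) ->
  psdmx (\sum_j A j).
Proof.
move=> Ap v; rewrite mulmx_sumr mulmx_suml summxE; apply: sumr_ge0 => j _; exact: Ap.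
Qed.

Lemma psd1 n : psdmx (1%:M : 'M[C]_n).
Proof.
move=> v; rewrite mulmx1 mxE; apply: sumr_ge0 => i _; rewrite !mxE mulrC.
exact: mul_conjC_ge0.
Qed.

Lemma sum_delta (T : finType) (k : T) (F : T -> C) :
  \sum_a ((a == k)%:R * F a) = F k.
Proof.
rewrite (bigD1 k) //= eqxx mul1r big1 ?addr0 // => a /negbTE ->; by rewrite mul0r.
Qed.

Lemma sum_delta' (T : finType) (k : T) (F : T -> C) :
  \sum_a (F a * (a == k)%:R) = F k.
Proof. rewrite -[RHS](@sum_delta T k); apply: eq_bigr => a _; exact: mulrC. Qed.

Definition selB2 m n (j : 'I_n) : 'M[C]_(m, m * n) :=
  \matrix_(i, a) (a == mxtens_index (i, j))%:R.
Definition selB1 m n (i : 'I_m) : 'M[C]_(n, m * n) :=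
  \matrix_(j, a) (a == mxtens_index (i, j))%:R.

Lemma ptrace2E m n (M : 'M[C]_(m * n)) :
  ptrace2 M = \sum_j selB2 m n j *m M *m adj (selB2 m n j).
Proof.
apply/matrixP => i i'; rewrite !mxE summxE; apply: eq_bigr => j _.
rewrite mxE /adj /selB2.
under eq_bigr do rewrite !mxE conjc_nat.
rewrite sum_delta'.
under eq_bigr do rewrite !mxE.
by rewrite sum_delta.
Qed.

Lemma ptrace1E m n (M : 'M[C]_(m * n)) :
  ptrace1 M = \sum_i selB1 m n i *m M *m adj (selB1 m n i).
Proof.
apply/matrixP => j j'; rewrite !mxE summxE; apply: eq_bigr => i _.
rewrite mxE /adj /selB1.
under eq_bigr do rewrite !mxE conjc_nat.
rewrite sum_delta'.
under eq_bigr do rewrite !mxE.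
by rewrite sum_delta.
Qed.

Lemma psd_ptrace2 m n (M : 'M[C]_(m * n)) : psdmx M -> psdmx (ptrace2 M).
Proof. by move=> Mp; rewrite ptrace2E; apply: psd_sum => j; apply: psd_conj. Qed.

Lemma psd_ptrace1 m n (M : 'M[C]_(m * n)) : psdmx M -> psdmx (ptrace1 M).
Proof. by move=> Mp; rewrite ptrace1E; apply: psd_sum => j; apply: psd_conj. Qed.

Lemma sum_tens m n (F : 'I_(m * n) -> C) :
  \sum_a F a = \sum_i \sum_j F (mxtens_index (i, j)).
Proof.
rewrite pair_big /=.
have -> : \sum_a F a = \sum_(p : 'I_m * 'I_n) F (mxtens_index p).
  apply: reindex.
  by exists (@mxtens_unindex m n) => x _; rewrite (mxtens_indexK, mxtens_unindexK).
by apply: eq_bigr => -[].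
Qed.

Lemma tr_ptrace2 m n (M : 'M[C]_(m * n)) : \tr (ptrace2 M) = \tr M.
Proof.
by rewrite /mxtrace sum_tens; apply: eq_bigr => i _; rewrite mxE.
Qed.

Lemma tr_ptrace1 m n (M : 'M[C]_(m * n)) : \tr (ptrace1 M) = \tr M.
Proof.
by rewrite /mxtrace sum_tens exchange_big; apply: eq_bigr => i _; rewrite mxE.
Qed.

Lemma tr_tens m n (A : 'M[C]_m) (B : 'M[C]_n) : \tr (A *t B) = \tr A * \tr B.
Proof. by rewrite /mxtrace mulr_sum; apply: eq_bigr => a _; rewrite mxE. Qed.

Lemma tr_unit_vec n (v : 'cV[C]_n) : unit_vec v -> \tr (v *m adj v) = 1.
Proof. by move=> h; rewrite mxtrace_mulC h mxtrace1. Qed.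

Definition envB d e (env : 'cV[C]_e) : 'M[C]_(d * e, d) :=
  \matrix_(a, k) (((mxtens_unindex a).1 == k)%:R * env (mxtens_unindex a).2 0).

Lemma envB_E d e (env : 'cV[C]_e) i j k :
  envB d e env (mxtens_index (i, j)) k = (k == i)%:R * env j 0.
Proof. by rewrite mxE mxtens_indexK /= eq_sym. Qed.

Lemma envB_mulE d e (env : 'cV[C]_e) (rho : 'M[C]_d) i j x :
  (envB d e env *m rho) (mxtens_index (i, j)) x = env j 0 * rho i x.
Proof.
rewrite mxE.
under eq_bigr do rewrite envB_E -mulrA.
by rewrite sum_delta.
Qed.

Lemma tens_envE d e (env : 'cV[C]_e) (rho : 'M[C]_d) :
  rho *t (env *m adj env) = envB d e env *m rho *m adj (envB d e env).
Proof.
apply/matrixP => a b.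
case: (mxtens_indexP a) => i j; case: (mxtens_indexP b) => k l.
rewrite tensmxE [RHS]mxE.
under [RHS]eq_bigr => x _ do rewrite envB_mulE /adj 2!mxE envB_E rmorphM /= conjc_nat mulrCA mulrC.
rewrite sum_delta' mxE big_ord1 /adj !mxE.
by rewrite mulrC -!mulrA (mulrC (rho i k)).
Qed.


Lemma chan_density d e (U : 'M[C]_(d * e)) (env : 'cV[C]_e) (rho : 'M[C]_d) :
  unitary U -> unit_vec env -> densitymx rho -> densitymx (chan U env rho).
Proof.
move=> [_ Uu] Eu [rp rt]; split.
  apply: psd_ptrace2; rewrite /joint_out tens_envE; apply: psd_conj.
  exact: psd_conj.
rewrite /chan tr_ptrace2 /joint_out mxtrace_mulC mulmxA Uu mul1mx.
by rewrite tr_tens rt tr_unit_vec // mul1r.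
Qed.

Lemma rhoQ_density r d (Psi : 'cV[C]_(r * d)) : unit_vec Psi ->
  densitymx (ptrace1 (Psi *m adj Psi)).
Proof.
move=> Pu; split.
  apply: psd_ptrace1; rewrite -[Psi *m _](congr1 (fun X => X *m adj Psi) (mulmx1 Psi)).
  exact/psd_conj/psd1.
by rewrite tr_ptrace1 tr_unit_vec.
Qed.

End Chan.

Theorem mainTheorem1 (R : realType) (r d e : nat)
  (Psi : 'cV[R[i]]_(r * d)) (U : 'M[R[i]]_(d * e)) (env : 'cV[R[i]]_e)
  (K : finType) (p : K -> R) (rho_k : K -> 'M[R[i]]_d) (H_Eve : R) :
  unit_vec Psi -> unitary U -> unit_vec env ->
  (forall k, 0 <= p k) -> \sum_(k : K) p k = 1 ->
  (forall k, densitymx (rho_k k)) ->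
  \sum_(k : K) ((p k)%:C)%C *: rho_k k = ptrace1 (Psi *m adj Psi) ->
  let rhoQ := ptrace1 (Psi *m adj Psi) in
  let chiQ := holevo p (fun k => chan U env (rho_k k)) (chan U env rhoQ) in
  let chiE := holevo p (fun k => cchan U env (rho_k k)) (cchan U env rhoQ) in
  coh_info Psi U env = chiQ - chiE ->
  H_Eve <= chiE ->
  coh_info Psi U env + H_Eve <= ln (d%:R).
Proof.
move=> Pu Uu Eu p0 p1 rk _ rhoQ chiQ chiE -> HE.
have dens : forall rho, densitymx rho -> densitymx (chan U env rho).
  by move=> rho; apply: chan_density.
have hQ : chiQ <= ln d%:R.
  rewrite /chiQ /holevo.
  have [q1 q2] := dens _ (@rhoQ_density R r d Psi Pu).
  have /andP[_ h] := @vN_bounds R d _ q1 q2.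
  have s0 : 0 <= \sum_k p k * vN_entropy (chan U env (rho_k k)).
    apply: sumr_ge0 => k _; apply: mulr_ge0 => //.
    have [h2 h3] := dens _ (rk k).
    by have /andP[] := @vN_bounds R d _ h2 h3.
  lra.
lra.
Qed.
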